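(* Call two $n\times n$ matrices $B_1,B_2$ equivalent if there is an $n\times n$ permutation matrix $P$ with $P^{T}B_1P=B_2$. Then for each positive integer $n$, the number of equivalence classes of $n\times n$ $(0,1)$-matrices all of whose eigenvalues are positive real numbers equals the number of acyclic digraphs with $n$ unlabeled vertices (i.e. the number of isomorphism classes of acyclic digraphs on $n$ vertices).
   Context: A digraph has, for each ordered pair of vertices $(i,j)$, at most one edge from $i$ to $j$; loops and pairs of opposite edges are permitted, parallel edges are not. A digraph is acyclic if it contains no directed cycle of any length, including loops (cycles of length $1$) and cycles of length $2$. Eigenvalues are taken over $\mathbb{C}$. *)

(* Defs.v *)
From HB Require Import structures.
From mathcomp Require Import all_boot all_order all_algebra all_fingroup all_field.
From mathcomp Require Import boolp.
Set Implicit Arguments. Unset Strict Implicit. Unset Printing Implicit Defensive.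
Import Order.TTheory GRing.Theory Num.Theory.
Local Open Scope ring_scope.

(* A (0,1)-matrix is an n x n matrix with boolean entries; [zo_mx A] is the
   corresponding complex (algC) matrix with entries 0 and 1. *)
Definition zo_mx n (A : 'M[bool]_n) : 'M[algC]_n :=
  map_mx (fun b : bool => (b : nat)%:R) A.

(* All eigenvalues (over C) are positive real numbers.  In algC, [0 < z]
   means z is real and positive. *)
Definition all_eig_pos n (A : 'M[bool]_n) : Prop :=
  forall z : algC, eigenvalue (zo_mx A) z -> 0 < z.

Definition mx_equiv n (A B : 'M[bool]_n) : bool :=
  [exists s : 'S_n, (perm_mx s)^T *m zo_mx A *m perm_mx s == zo_mx B].

Definition num_pos_eig_classes n : nat :=
  #|[set [set B | `[< all_eig_pos B >] && mx_equiv A B]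
     | A in [set A : 'M[bool]_n | `[< all_eig_pos A >]]]|.

(* A digraph on vertex set 'I_n: a set of ordered pairs (i, j) = edge i -> j
   (loops and opposite pairs allowed, no parallel edges). *)
Definition digraph n := {set 'I_n * 'I_n}.
Definition edge n (G : digraph n) : rel 'I_n := fun i j => (i, j) \in G.

(* Acyclic: no directed cycle (non-empty sequence of distinct vertices
   v1 -> v2 -> ... -> vk -> v1), including loops (k = 1) and 2-cycles. *)
Definition acyclic n (G : digraph n) : Prop :=
  forall c : seq 'I_n, c != [::] -> ~~ ucycleb (edge G) c.

Definition dg_iso n (G H : digraph n) : bool :=
  [exists s : 'S_n, [forall i, forall j, edge G i j == edge H (s i) (s j)]].

Definition num_acyclic_unlabeled n : nat :=
  #|[set [set H | `[< acyclic H >] && dg_iso G H]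
     | G in [set G : digraph n | `[< acyclic G >]]]|.

(* Main.v *)
Require Import Defs.
From HB Require Import structures.
From mathcomp Require Import all_boot all_order all_algebra all_fingroup all_field.
From mathcomp Require Import boolp.
Set Implicit Arguments. Unset Strict Implicit. Unset Printing Implicit Defensive.
Import Order.TTheory GRing.Theory Num.Theory.
Local Open Scope ring_scope.
Section G.
Variables (T : eqType) (e : rel T).

Lemma closed_sub x p : path e x p -> ~~ uniq (x :: p) ->
  exists y q, [/\ path e y q, last y q = y, (0 < size q)%N & (size q <= size p)%N].
Proof.
elim: p x => [|z p IH] x //.
move=> P0; rewrite cons_uniq negb_and negbK.
case xin: (x \in z :: p) => /= H.
  have Esz : size (z :: p) = (size p).+1 by [].
  move: P0 Esz; case/splitPr: xin => p1 p2 P0 Esz.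
  exists x, (rcons p1 x); split.
  - by move: P0; rewrite -cat_rcons cat_path => /andP[].
  - by rewrite last_rcons.
  - by rewrite size_rcons.
  - by rewrite size_rcons -Esz size_cat /= addnS ltnS leq_addr.
move: P0 => /= /andP[_ pz].
have [y [q [P1 P2 P3 P4]]] := IH z pz H.
by exists y, q; split => //; apply: leqW.
Qed.

Lemma get_ucycle y q : path e y q -> last y q = y -> (0 < size q)%N ->
  exists c, c != [::] /\ ucycleb e c.
Proof.
move: {2}(size q) (leqnn (size q)) => k; elim: k y q => [|k IH] y q.
  by rewrite leqn0 => /eqP ->.
case/lastP: q => [|q' z] // Hs; rewrite last_rcons rcons_path => /andP[pq ez] zy _.
subst z.
case U: (uniq (y :: q')).
  exists (y :: q'); split => //; rewrite /ucycleb /= rcons_path pq ez /=.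
  exact: U.
have [y2 [q2 [P1 P2 P3 P4]]] := closed_sub pq (negbT U).
apply: (IH y2 q2) => //; rewrite size_rcons in Hs; exact: leq_trans P4 Hs.
Qed.
End G.
Section M.
Variable n : nat.
Implicit Types N : 'M[algC]_n.

Lemma powS_E N k i j : (N ^+ k.+1) i j = \sum_l N i l * (N ^+ k) l j.
Proof. by rewrite exprS -mulmxE mxE. Qed.

Lemma pow_nneg N : (forall i j, 0 <= N i j) -> forall k i j, 0 <= (N ^+ k) i j.
Proof.
move=> H; elim=> [|k IH] i j.
  by rewrite expr0 mxE ler0n.
by rewrite powS_E sumr_ge0 // => l _; rewrite mulr_ge0.
Qed.

Lemma walk_ge1 (e : rel 'I_n) N : (forall i j, 0 <= N i j) ->
  (forall i j, e i j -> 1 <= N i j) ->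
  forall x p, path e x p -> 1 <= (N ^+ size p) x (last x p).
Proof.
move=> H0 H1 x p; elim: p x => [|z p IH] x /=.
  by rewrite expr0 mxE eqxx.
move=> /andP[exz pz]; rewrite powS_E (bigD1 z) //=.
rewrite -[1]addr0 lerD //; last by rewrite sumr_ge0 // => l _; rewrite mulr_ge0 // pow_nneg.
rewrite -[1]mulr1 ler_pM //; by [apply: H1 | apply: IH].
Qed.

Lemma walk_ex (e : rel 'I_n) N : (forall i j, N i j != 0 -> e i j) ->
  forall k i j, (N ^+ k) i j != 0 -> exists p, [/\ size p = k, path e i p & last i p = j].
Proof.
move=> H; elim=> [|k IH] i j.
  rewrite expr0 mxE; case: (eqVneq i j) => [->|] // _; first by exists [::]. by rewrite eqxx.
rewrite powS_E; case: (pickP (fun l => N i l * (N ^+ k) l j != 0)) => [l|].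
  rewrite mulf_eq0 negb_or => /andP[/H eil /IH [p [sp pp lp]]] _.
  by exists (l :: p); rewrite /= eil sp pp lp.
move=> H0; rewrite big1 ?eqxx // => l _; move: (H0 l) => /= /negbFE /eqP //.
Qed.
End M.
Lemma spec m (B : 'M[bool]_m.+1) : all_eig_pos B ->
  (forall i, B i i) /\ (zo_mx B - 1) ^+ m.+1 = 0.
Proof.
move=> HB; set M := zo_mx B.
have [r Hr] := closed_field_poly_normal (char_poly M).
rewrite (monicP (char_poly_monic M)) scale1r in Hr.
have sz : size r = m.+1.
  by have := size_char_poly M; rewrite Hr size_prod_XsubC => -[].
have pos z : z \in r -> 0 < z.
  by move=> zr; apply: HB; rewrite eigenvalue_root_char Hr root_prod_XsubC.
have tr : \sum_(z <- r) z = \tr M.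
  apply: oppr_inj; rewrite -char_poly_trace // Hr -coefPn_prod_XsubC ?sz //.
have dt : \prod_(z <- r) z = \det M.
  have := char_poly_det M; rewrite Hr coef0_prod_XsubC sz.
  by move/(mulfI (negbT (signr_eq0 _ _))).
have trE : \tr M = \sum_i ((B i i : nat)%:R : algC).
  by rewrite /mxtrace; apply: eq_bigr => i _; rewrite /M /zo_mx mxE.
have trle : \tr M <= m.+1%:R.
  rewrite trE -natr_sum ler_nat -[X in (_ <= X)%N]card_ord -sum1_card.
  by apply: leq_sum => i _; case: (B i i).
have dt1 : 1 <= \det M.
  have E : \det M = (\det (map_mx (fun b : bool => (b : nat)%:Z) B))%:~R.
    rewrite -det_map_mx; congr (\det _).
    by apply/matrixP => i j; rewrite !mxE; case: (B i j).
  have : 0 < \det M by rewrite -dt big_seq prodr_gt0 // => z /pos.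
  by rewrite E ltr0z ler1z.
pose E (i : 'I_(size r)) := r`_i.
have nn : {in predT, forall i, 0 <= E i}.
  by move=> i _; apply/ltW/pos/mem_nth.
have [Hle Heq] := @leif_AGM _ _ predT E nn.
have cT : #|@predT 'I_(size r)| = m.+1 by rewrite -sz -[RHS]card_ord.
have sE : \sum_(i in predT) E i = \sum_(z <- r) z.
  by rewrite (big_nth 0) big_mkord; apply: eq_bigl.
have pE : \prod_(i in predT) E i = \prod_(z <- r) z.
  by rewrite (big_nth 0) big_mkord; apply: eq_bigl.
rewrite cT sE pE tr in Hle Heq.
have tr0 : 0 <= \tr M by rewrite trE sumr_ge0.
have k0 : 0 < m.+1%:R :> algC by rewrite ltr0n.
have mu1 : (\tr M / m.+1%:R) ^+ m.+1 <= 1.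
  by rewrite exprn_ile1 ?divr_ge0 ?ler0n // ler_pdivrMr // mul1r.
have eqp : \prod_(z <- r) z == (\tr M / m.+1%:R) ^+ m.+1.
  by rewrite eq_le Hle /= (le_trans mu1) // dt.
rewrite eqp in Heq.
have r0 : (0 < size r)%N by rewrite sz.
pose c := E (Ordinal r0).
have Ec i : E i = c.
  by move: Heq => /esym /forallP /(_ i) /implyP /(_ isT) /forallP /(_ (Ordinal r0)) /implyP /(_ isT) /eqP.
have rc z : z \in r -> z = c.
  move=> zr; rewrite -(nth_index 0 zr); have zi : (index z r < size r)%N by rewrite index_mem. exact: (Ec (Ordinal zi)).
have pc : \prod_(z <- r) z = c ^+ m.+1.
  by rewrite -pE (eq_bigr (fun _ => c)) ?prodr_const ?cT // => i _; rewrite Ec.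
have sc : \sum_(z <- r) z = c *+ m.+1.
  by rewrite -sE (eq_bigr (fun _ => c)) ?sumr_const ?cT // => i _; rewrite Ec.
have c0 : 0 < c by apply/pos/mem_nth.
have c1 : c <= 1.
  by rewrite -(ler_pMn2r (ltn0Sn m)) -sc tr.
have c_1 : c = 1.
  apply/eqP; rewrite eq_le c1 /= real_leNgt ?gtr0_real ?ltr01 //; apply/negP => cl1.
  have := exprn_ilt1 m.+1 (ltW c0) cl1; rewrite /= -pc dt => /(lt_le_trans) /(_ dt1).
  by rewrite ltxx.
split.
  have : \tr M = m.+1%:R by rewrite -tr sc c_1.
  rewrite trE -natr_sum => /eqP; rewrite eqr_nat => /eqP Hs j.
  apply/negPn/negP => Bj.
  have : (\sum_i (B i i : nat) <= m)%N.
    rewrite (bigD1 j) //= (negbTE Bj) add0n.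
    apply: (@leq_trans (\sum_(i | i != j) 1)%N).
      by apply: leq_sum => i _; case: (B i i).
    by rewrite sum1_card cardC1 card_ord.
  by rewrite Hs ltnn.
have CH := Cayley_Hamilton M.
have E1 : char_poly M = ('X - 1) ^+ m.+1.
  rewrite Hr (eq_big_seq (fun _ => 'X - 1)); last first.
    by move=> z /rc ->; rewrite c_1 polyC1.
  by rewrite (big_nth 0) prodr_const_nat subn0 sz.
by rewrite E1 rmorphXn rmorphB /= horner_mx_X rmorph1 in CH.
Qed.
Lemma walk_rep n (N : 'M[algC]_n) : (forall i j, 0 <= N i j) ->
  forall k x, 1 <= (N ^+ k) x x -> forall t, 1 <= (N ^+ (k * t)) x x.
Proof.
move=> H0 k x H1; elim=> [|t IH].
  by rewrite muln0 expr0 mxE eqxx.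
rewrite mulnS exprD -mulmxE mxE (bigD1 x) //=.
rewrite -[1]addr0 lerD //; last first.
  by rewrite sumr_ge0 // => l _; rewrite mulr_ge0 // pow_nneg.
by rewrite -[1]mulr1 ler_pM.
Qed.

Definition mxOf n (G : digraph n) : 'M[bool]_n :=
  \matrix_(i, j) ((i == j) || edge G i j).
Definition graphOf n (B : 'M[bool]_n) : digraph n :=
  [set ij | B ij.1 ij.2 && (ij.1 != ij.2)].
Arguments mxOf {n}.
Arguments graphOf {n}.

Lemma noloop n (G : digraph n) : acyclic G -> forall i, ~~ edge G i i.
Proof. by move=> H i; have := H [:: i] isT; rewrite /ucycleb /= !andbT. Qed.

Lemma nil_acyclic n (G : digraph n) : acyclic G -> (zo_mx (mxOf G) - 1) ^+ n = 0.
Proof.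
move=> H; apply/matrixP => i j; rewrite [RHS]mxE; apply/eqP; apply: contraT => Hnz.
have Hent : forall a b, (zo_mx (mxOf G) - 1) a b != 0 -> edge G a b.
  move=> a b; rewrite !mxE; case: (eqVneq a b) => [<-|ne] /=.
    by rewrite subrr eqxx.
  by rewrite subr0; case: (edge G a b); rewrite ?eqxx.
have [p [sp pp lp]] := walk_ex Hent Hnz.
have nu : ~~ uniq (i :: p).
  apply/negP => U; have := max_card (mem (i :: p)).
  by rewrite (card_uniqP U) /= sp card_ord ltnn.
have [y [q [P1 P2 P3 P4]]] := closed_sub pp nu.
have [c [c0 uc]] := get_ucycle P1 P2 P3.
by move: (H c c0); rewrite uc.
Qed.

Lemma pos_acyclic n (G : digraph n) : acyclic G -> all_eig_pos (mxOf G).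
Proof.
move=> H z /eigenvalueP [v Hv v0].
set N := zo_mx (mxOf G) - 1.
have Hk k : v *m N ^+ k = (z - 1) ^+ k *: v.
  elim: k => [|k IH]; first by rewrite expr0 mulmx1 scale1r.
  rewrite exprSr -mulmxE mulmxA IH -scalemxAl mulmxBr Hv mulmx1.
  by rewrite -[in X in _ *: (_ - X)](scale1r v) -scalerBl scalerA -exprSr.
have := Hk n; rewrite nil_acyclic // mulmx0 => /eqP; rewrite eq_sym scaler_eq0 (negbTE v0) orbF.
case: n G H v Hv v0 N Hk => [|n] G H v Hv v0 N Hk.
  by rewrite (thinmx0 v) eqxx in v0.
by rewrite expf_eq0 /= subr_eq0 => /eqP ->; rewrite ltr01.
Qed.


Lemma acyclic_pos m (B : 'M[bool]_m.+1) : all_eig_pos B -> acyclic (graphOf B).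
Proof.
move=> /spec [diag nil] c c0; apply/negP => uc.
case: c c0 uc => [|x p] // _ /andP [cy _].
set N := zo_mx B - 1.
have nn i j : 0 <= N i j.
  rewrite !mxE; case: (eqVneq i j) => [<-|ne] /=.
    by rewrite diag subrr.
  by rewrite subr0 ler0n.
have e1 i j : edge (graphOf B) i j -> 1 <= N i j.
  rewrite /edge inE /= => /andP [Bij ne]; rewrite !mxE Bij (negbTE ne) subr0.
  by rewrite lexx.
have := walk_ge1 nn e1 cy; rewrite last_rcons => /(walk_rep nn) /(_ m.+1).
rewrite mulnC exprM nil expr0n size_rcons /= mxE.
by rewrite ler10.
Qed.

Lemma mxOf_graphOf m (B : 'M[bool]_m.+1) : all_eig_pos B -> mxOf (graphOf B) = B.
Proof.
move=> /spec [diag _]; apply/matrixP => i j; rewrite mxE /edge inE /=.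
by case: (eqVneq i j) => [<-|ne] /=; rewrite ?diag ?andbT.
Qed.

Lemma graphOf_mxOf n (G : digraph n) : acyclic G -> graphOf (mxOf G) = G.
Proof.
move=> H; apply/setP => -[i j]; rewrite inE mxE /=.
case: (eqVneq i j) => [<-|ne] /=; last by rewrite andbT.
by apply/esym/negbTE; exact: (noloop H i).
Qed.

Lemma conj_perm_E n (s : 'S_n) (M : 'M[algC]_n) i j :
  ((perm_mx s)^T *m M *m perm_mx s) i j = M ((s^-1)%g i) ((s^-1)%g j).
Proof.
rewrite tr_perm_mx -row_permE.
have -> : perm_mx s = perm_mx ((s^-1)^-1)%g by rewrite invgK.
by rewrite -col_permE !mxE.
Qed.

Lemma zo_inj (a b : bool) : ((a : nat)%:R : algC) = (b : nat)%:R -> a = b.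
Proof. by move/eqP; rewrite eqr_nat; case: a; case: b. Qed.

Lemma equiv_iso n (G H : digraph n) : acyclic G -> acyclic H ->
  mx_equiv (mxOf G) (mxOf H) = dg_iso G H.
Proof.
move=> AG AH; apply/existsP/existsP => [[s /eqP Hs]|[s /forallP Hs]]; exists s.
  apply/forallP => k; apply/forallP => l.
  have := congr1 (fun X : 'M[algC]_n => X (s k) (s l)) Hs.
  rewrite /= conj_perm_E !permK /zo_mx !mxE (inj_eq perm_inj) => /zo_inj.
  case: (eqVneq k l) => [<-|ne] /=; last by move=> ->.
  by rewrite (negbTE (noloop AG k)) (negbTE (noloop AH (s k))).
apply/eqP/matrixP => i j; rewrite conj_perm_E /zo_mx !mxE.
by move: (Hs ((s^-1)%g i)) => /forallP /(_ ((s^-1)%g j)) /eqP ->; rewrite !permKV (inj_eq perm_inj).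
Qed.

Lemma classM_eq m (G : digraph m.+1) : acyclic G ->
  [set B | `[< all_eig_pos B >] && mx_equiv (mxOf G) B] =
  mxOf @: [set H | `[< acyclic H >] && dg_iso G H].
Proof.
move=> AG; apply/setP => B; rewrite inE; apply/andP/imsetP.
  move=> [/asboolP PB EB]; exists (graphOf B); last by rewrite mxOf_graphOf.
  rewrite inE; have AB := acyclic_pos PB; apply/andP; split; first exact/asboolP.
  by rewrite -equiv_iso // mxOf_graphOf.
move=> [H]; rewrite inE => /andP [/asboolP AH iso] ->; split.
  exact/asboolP/pos_acyclic.
by rewrite equiv_iso.
Qed.

Theorem mainTheorem5 (n : nat) : (0 < n)%N ->
  num_pos_eig_classes n = num_acyclic_unlabeled n.
Proof.
case: n => [|m] // _; rewrite /num_pos_eig_classes /num_acyclic_unlabeled.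
set SG := [set [set H | `[< acyclic H >] && dg_iso G H]
     | G in [set G : digraph m.+1 | `[< acyclic G >]]].
have -> : [set [set B | `[< all_eig_pos B >] && mx_equiv A B]
     | A in [set A : 'M[bool]_m.+1 | `[< all_eig_pos A >]]] =
   (fun X : {set digraph m.+1} => mxOf @: X) @: SG.
  apply/setP => X; apply/imsetP/imsetP.
    move=> [A]; rewrite inE => /asboolP PA ->.
    exists [set H | `[< acyclic H >] && dg_iso (graphOf A) H].
      by apply: imset_f; rewrite inE; apply/asboolP/acyclic_pos.
    by rewrite -classM_eq ?mxOf_graphOf //; apply: acyclic_pos.
  move=> [Y /imsetP [G]]; rewrite inE => /asboolP AG -> ->.
  exists (mxOf G); first by rewrite inE; apply/asboolP/pos_acyclic.
  by rewrite classM_eq.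
apply: card_in_imset => X Y /imsetP [G _ ->] /imsetP [H _ ->] E.
have K (Z : {set digraph m.+1}) : Z \subset [set G | `[< acyclic G >]] ->
    graphOf @: (mxOf @: Z) = Z.
  move=> sub; rewrite -imset_comp -[RHS]imset_id; apply: eq_in_imset => K KZ /=.
  by apply: graphOf_mxOf; move/subsetP: sub => /(_ K KZ); rewrite inE => /asboolP.
have sub (G0 : digraph m.+1) : [set H | `[< acyclic H >] && dg_iso G0 H] \subset [set G | `[< acyclic G >]].
  by apply/subsetP => Z; rewrite !inE => /andP[].
by rewrite -(K _ (sub G)) E K.
Qed.
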